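(* Let $M$ be a monotone triangle with $n$ rows and strictly increasing bottom row. Then the sum of the weights $\mathrm{W}(A)$ over all arrowed monotone triangles $A$ whose underlying monotone triangle (forgetting decorations) is $M$ equals $\prod_{i=1}^n(uX_i+vX_i^{-1}+w)\cdot\mathrm{W}_0(M)$.
   Context: Monotone triangle: array $(m_{i,j})_{1\le j\le i\le n}$ of integers with $m_{i+1,j}\le m_{i,j}\le m_{i+1,j+1}$, $m_{i,j}<m_{i,j+1}$. Northwest/northeast-neighbours of $m_{i,j}$: $m_{i-1,j-1}$, $m_{i-1,j}$. An arrowed monotone triangle decorates every entry by one of $\nwarrow,\nearrow,\nwarrow\!\nearrow$ such that an entry equal to its northwest-neighbour carries $\nearrow$ and an entry equal to its northeast-neighbour carries $\nwarrow$; its weight is $\mathrm{W}(A)=u^{\#\nearrow}v^{\#\nwarrow}w^{\#\nwarrow\nearrow}\prod_iX_i^{(\text{sum of row }i)-(\text{sum of row }i-1)+(\#\nearrow\text{ in row }i)-(\#\nwarrow\text{ in row }i)}$ (sum of row $0$ is $0$). For $M$, an entry $m_{i,j}$ with $i<n$ is special if $m_{i+1,j}<m_{i,j}<m_{i+1,j+1}$, left-leaning if $m_{i,j}=m_{i+1,j}$, right-leaning if $m_{i,j}=m_{i+1,j+1}$; $s_i,l_i,r_i$ count these in row $i$, $s_0=l_0=r_0=0$, $l(M)=\sum l_i$, $r(M)=\sum r_i$, $d_i(M)=\sum_j m_{i,j}-\sum_j m_{i-1,j}+r_{i-1}-l_{i-1}$, and $\mathrm{W}_0(M)=u^{r(M)}v^{l(M)}\prod_iX_i^{d_i(M)}(w+uX_i+vX_i^{-1})^{s_{i-1}(M)}$.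 *)

(* Defs.v *)
From HB Require Import structures.
From mathcomp Require Import all_boot all_order all_algebra.
Set Implicit Arguments. Unset Strict Implicit. Unset Printing Implicit Defensive.
Import Order.TTheory GRing.Theory Num.Theory.
Local Open Scope ring_scope.

(* A triangular array is a function m : nat -> nat -> int, read with the
   paper's 1-based indices: m i j is m_{i,j}, only 1 <= j <= i <= n matter. *)

Definition is_monotone_triangle (n : nat) (m : nat -> nat -> int) : Prop :=
  (forall i j : nat, (1 <= j)%N -> (j < i)%N -> (i <= n)%N -> m i j < m i j.+1) /\
  (forall i j : nat, (1 <= j)%N -> (j <= i)%N -> (i < n)%N ->
      m i.+1 j <= m i j /\ m i j <= m i.+1 j.+1).

(* positions of a triangle with n rows, 0-based: (a,b) with b <= a < n,
   standing for the entry m_{a+1,b+1} *)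
Definition pos (n : nat) := {p : 'I_n * 'I_n | (p.2 <= p.1)%N}.
Definition prow n (p : pos n) : nat := (val p).1.+1.
Definition pcol n (p : pos n) : nat := (val p).2.+1.

(* decorations: code 0 = \nwarrow, 1 = \nearrow, 2 = \nwarrow\nearrow *)
Definition isNW (c : 'I_3) : bool := val c == 0%N.
Definition isNE (c : 'I_3) : bool := val c == 1%N.
Definition isBoth (c : 'I_3) : bool := val c == 2%N.

Definition arrowed_ok n (m : nat -> nat -> int) (D : {ffun pos n -> 'I_3}) : bool :=
  [forall p : pos n,
    ((2 <= pcol p)%N && (m (prow p) (pcol p) == m (prow p).-1 (pcol p).-1) ==> isNE (D p)) &&
    ((pcol p < prow p)%N && (m (prow p) (pcol p) == m (prow p).-1 (pcol p)) ==> isNW (D p))].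

Definition rowsum (m : nat -> nat -> int) (i : nat) : int :=
  \sum_(1 <= j < i.+1) m i j.

Definition cnt n (P : 'I_3 -> bool) (D : {ffun pos n -> 'I_3}) : nat :=
  #|[set p : pos n | P (D p)]|.
Definition cnt_row n (P : 'I_3 -> bool) (D : {ffun pos n -> 'I_3}) (i : nat) : nat :=
  #|[set p : pos n | (prow p == i) && P (D p)]|.

Definition Wt (R : fieldType) (u v w : R) (X : nat -> R) n (m : nat -> nat -> int)
    (D : {ffun pos n -> 'I_3}) : R :=
  u ^+ cnt isNE D * v ^+ cnt isNW D * w ^+ cnt isBoth D *
  \prod_(1 <= i < n.+1)
     X i ^ (rowsum m i - rowsum m i.-1 + (cnt_row isNE D i)%:Z - (cnt_row isNW D i)%:Z).

(* s_i, l_i, r_i for 1 <= i < n; 0 otherwise (in particular for i = 0) *)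
Definition s_cnt n (m : nat -> nat -> int) (i : nat) : nat :=
  if (1 <= i < n)%N then \sum_(1 <= j < i.+1) ((m i.+1 j < m i j) && (m i j < m i.+1 j.+1) : nat)
  else 0.
Definition l_cnt n (m : nat -> nat -> int) (i : nat) : nat :=
  if (1 <= i < n)%N then \sum_(1 <= j < i.+1) ((m i j == m i.+1 j) : nat) else 0.
Definition r_cnt n (m : nat -> nat -> int) (i : nat) : nat :=
  if (1 <= i < n)%N then \sum_(1 <= j < i.+1) ((m i j == m i.+1 j.+1) : nat) else 0.

Definition lM n m : nat := \sum_(1 <= i < n) l_cnt n m i.
Definition rM n m : nat := \sum_(1 <= i < n) r_cnt n m i.

Definition dM n (m : nat -> nat -> int) (i : nat) : int :=
  rowsum m i - rowsum m i.-1 + (r_cnt n m i.-1)%:Z - (l_cnt n m i.-1)%:Z.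

Definition W0 (R : fieldType) (u v w : R) (X : nat -> R) n (m : nat -> nat -> int) : R :=
  u ^+ rM n m * v ^+ lM n m *
  \prod_(1 <= i < n.+1) (X i ^ dM n m i * (w + u * X i + v * (X i)^-1) ^+ s_cnt n m i.-1).

(* Main.v *)
Require Import Defs.
From HB Require Import structures.
From mathcomp Require Import all_boot all_order all_algebra.
From mathcomp Require Import ring lra zify.
Import Order.TTheory GRing.Theory Num.Theory.
Local Open Scope ring_scope.

Definition hc (R : fieldType) (u v w : R) (x : R) (c : 'I_3) : R :=
  (if isNE c then u * x else 1) * (if isNW c then v * x^-1 else 1) * (if isBoth c then w else 1).

Arguments hc {R}.

Lemma pow_cnt (R : fieldType) n (P : 'I_3 -> bool) (D : {ffun pos n -> 'I_3}) (x : R) :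
  x ^+ cnt P D = \prod_(p : pos n) (if P (D p) then x else 1).
Proof. by rewrite /cnt -prodr_const big_mkcond; apply: eq_bigr => p _; rewrite inE. Qed.

Lemma pow_row (R : fieldType) n (P : 'I_3 -> bool) (D : {ffun pos n -> 'I_3}) (G : nat -> R) :
  \prod_(1 <= i < n.+1) G i ^+ cnt_row P D i = \prod_(p : pos n) (if P (D p) then G (prow p) else 1).
Proof.
under eq_bigr do rewrite /cnt_row -prodr_const big_mkcond.
rewrite exchange_big /=; apply: eq_bigr => p _.
under eq_bigr do rewrite inE.
case: (P (D p)).
- under eq_bigr do rewrite andbT.
  rewrite -big_mkcond /=.
  rewrite (eq_bigl (fun i => i == prow p)); last by move=> i; rewrite eq_sym.
  rewrite big_nat1_eq.
  have -> : (1 <= prow p < n.+1)%N by rewrite /prow; case: p => [[a b] /= _]; rewrite ltnS ltn_ord.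
  done.
- by rewrite big1 // => i _; rewrite andbF.
Qed.

Lemma expo (R : fieldType) (x : R) (a : int) (b c : nat) : x != 0 ->
  x ^ (a + b%:Z - c%:Z) = x ^ a * x ^+ b * x^-1 ^+ c.
Proof. by move=> hx; rewrite expfzDr // expfzDr // exprVn exprnN -exprnP. Qed.

Lemma Wt_decomp (R : fieldType) (u v w : R) (X : nat -> R) n (m : nat -> nat -> int)
  (D : {ffun pos n -> 'I_3}) : (forall i : nat, (1 <= i <= n)%N -> X i != 0) ->
  Wt u v w X m D = \prod_(1 <= i < n.+1) X i ^ (rowsum m i - rowsum m i.-1) *
     \prod_(p : pos n) hc u v w (X (prow p)) (D p).
Proof.
move=> hX; rewrite /Wt.
rewrite (eq_big_nat _ _ (F2 := fun i => X i ^ (rowsum m i - rowsum m i.-1) *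
      X i ^+ cnt_row isNE D i * (X i)^-1 ^+ cnt_row isNW D i)); last first.
  by move=> i hi; rewrite expo // hX.
rewrite !big_split /= !pow_row !pow_cnt.
have E1 : \prod_(p : pos n) (if isNE (D p) then u * X (prow p) else 1) =
  \prod_(p : pos n) (if isNE (D p) then u else 1) * \prod_(p : pos n) (if isNE (D p) then X (prow p) else 1).
  by rewrite -big_split; apply: eq_bigr => q _; case: (isNE (D q)) => //=; rewrite mulr1.
have E2 : \prod_(p : pos n) (if isNW (D p) then v / X (prow p) else 1) =
  \prod_(p : pos n) (if isNW (D p) then v else 1) * \prod_(p : pos n) (if isNW (D p) then (X (prow p))^-1 else 1).
  by rewrite -big_split; apply: eq_bigr => q _; case: (isNW (D q)) => //=; rewrite mulr1.
rewrite E1 E2.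
ring.
Qed.

Lemma sum_distr (R : fieldType) n (Q : pos n -> pred 'I_3) (F : pos n -> 'I_3 -> R) :
  \sum_(D : {ffun pos n -> 'I_3} | [forall p, Q p (D p)]) \prod_p F p (D p) =
  \prod_p \sum_(c | Q p c) F p c.
Proof.
rewrite bigA_distr_big_dep; apply: eq_bigl => D.
by apply/forallP/familyP => H p; have := H p.
Qed.

Lemma tri (x y z : int) : y <= x -> x <= z -> y < z ->
  (nat_of_bool (x == y) + nat_of_bool (x == z) + nat_of_bool ((y < x)%R && (x < z)%R) = 1)%N.
Proof.
move=> h1 h2 h3.
have [->|hxy] := eqVneq x y.
  by rewrite ltxx /= (lt_eqF h3).
have [->|hxz] := eqVneq x z; first by rewrite ltxx andbF.
have -> : y < x by rewrite lt_neqAle eq_sym hxy h1.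
have -> : x < z by rewrite lt_neqAle hxz h2.
done.
Qed.
Lemma prod_pos (R : fieldType) n (F : nat -> nat -> R) :
  \prod_(p : pos n) F (prow p) (pcol p) = \prod_(1 <= i < n.+1) \prod_(1 <= j < i.+1) F i j.
Proof.
rewrite /prow /pcol.
have -> : \prod_(p : pos n) F (val p).1.+1 (val p).2.+1 = \prod_(q : 'I_n * 'I_n | (q.2 <= q.1)%N) F q.1.+1 q.2.+1.
  by symmetry; exact: (big_sub [pred q : 'I_n * 'I_n | (q.2 <= q.1)%N] (fun q => F q.1.+1 q.2.+1)).
rewrite -(pair_big_dep xpredT (fun (a b : 'I_n) => (b <= a)%N) (fun (a b : 'I_n) => F a.+1 b.+1)) /=.
rewrite big_add1 /= big_mkord; apply: eq_bigr => a _.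
rewrite big_add1 /=.
rewrite (big_nat_widen 0 a.+1 n) // big_mkord.
by apply: eq_bigl.
Qed.
Definition okp n (m : nat -> nat -> int) (p : pos n) (c : 'I_3) : bool :=
    ((2 <= pcol p)%N && (m (prow p) (pcol p) == m (prow p).-1 (pcol p).-1) ==> isNE c) &&
    ((pcol p < prow p)%N && (m (prow p) (pcol p) == m (prow p).-1 (pcol p)) ==> isNW c).

Arguments okp {n}.

Definition Sv (R : fieldType) (u v w : R) (X : nat -> R) (m : nat -> nat -> int) (i j : nat) : R :=
  if (2 <= j)%N && (m i j == m i.-1 j.-1) then u * X i
  else if (j < i)%N && (m i j == m i.-1 j) then v * (X i)^-1
  else u * X i + v * (X i)^-1 + w.
Arguments Sv {R}.

Lemma pos_facts n (p : pos n) : (1 <= pcol p)%N /\ (pcol p <= prow p)%N /\ (prow p <= n)%N.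
Proof. by case: p => [[a b] /= h]; rewrite /pcol /prow /=; split => //; split => //; apply: ltn_ord. Qed.

Lemma excl n (m : nat -> nat -> int) i j : is_monotone_triangle n m ->
  (1 <= j)%N -> (j <= i)%N -> (i <= n)%N ->
  ~~ (((2 <= j)%N && (m i j == m i.-1 j.-1)) && ((j < i)%N && (m i j == m i.-1 j))).
Proof.
move=> [H1 _] hj hji hi; apply/negP => /andP[/andP[h2 /eqP e1] /andP[hlt /eqP e2]].
have h : m i.-1 j.-1 < m i.-1 j.-1.+1 by apply: H1; lia.
rewrite prednK in h; last by lia.
by move: h; rewrite -e1 -e2 ltxx.
Qed.

Lemma sum3 (R : fieldType) (u v w x : R) (A B : bool) : ~~ (A && B) ->
  \sum_(c : 'I_3 | (A ==> isNE c) && (B ==> isNW c)) hc u v w x c =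
  if A then u * x else if B then v * x^-1 else u * x + v * x^-1 + w.
Proof.
rewrite big_mkcond !big_ord_recl big_ord0 /hc /isNE /isNW /isBoth /bump /=.
by case: A; case: B => //= _; ring.
Qed.

Lemma entry (R : fieldType) (u v w : R) (X : nat -> R) n (m : nat -> nat -> int) (p : pos n) :
  is_monotone_triangle n m ->
  \sum_(c | okp m p c) hc u v w (X (prow p)) c = Sv u v w X m (prow p) (pcol p).
Proof.
move=> Hm; have [h1 [h2 h3]] := pos_facts _ p.
rewrite /okp /Sv; apply: sum3; exact: (@excl _ _ _ _ Hm h1 h2 h3).
Qed.

Lemma row_prod (R : fieldType) (u v w : R) (X : nat -> R) n (m : nat -> nat -> int) :
  is_monotone_triangle n m -> forall i, (1 <= i <= n)%N ->
  \prod_(1 <= j < i.+1) Sv u v w X m i j =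
  (u * X i) ^+ r_cnt n m i.-1 * (v * (X i)^-1) ^+ l_cnt n m i.-1 *
  (u * X i + v * (X i)^-1 + w) ^+ (s_cnt n m i.-1).+1.
Proof.
move=> Hm [|[|k]] // /andP[_ hk].
  by rewrite big_nat1 /Sv /r_cnt /l_cnt /s_cnt /= !expr0 expr1 !mul1r.
set T := u * X k.+2 + v * (X k.+2)^-1 + w.
set A := u * X k.+2; set B := v * (X k.+2)^-1.
pose a j := (((2 <= j)%N && (m k.+2 j == m k.+1 j.-1)) : nat).
pose b j := (((j < k.+2)%N && (m k.+2 j == m k.+1 j)) : nat).
have sab : forall j, (1 <= j < k.+3)%N -> (a j + b j <= 1)%N.
  move=> j /andP[h1 h2].
  have hj2 : (j <= k.+2)%N by lia.
  have := @excl _ _ k.+2 j Hm h1 hj2 hk; rewrite /a /b /=.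
  by case: (m k.+2 j == m k.+1 j.-1); case: (m k.+2 j == m k.+1 j); case: (1 < j)%N; case: (j < k.+2)%N.
have Ej : forall j, (1 <= j < k.+3)%N ->
   Sv u v w X m k.+2 j = A ^+ a j * B ^+ b j * T ^+ (1 - a j - b j).
  move=> j /andP[h1 h2].
  have hj2 : (j <= k.+2)%N by lia.
  have := @excl _ _ k.+2 j Hm h1 hj2 hk; rewrite /a /b /Sv /=.
  by case: (m k.+2 j == m k.+1 j.-1); case: (m k.+2 j == m k.+1 j); case: (1 < j)%N; case: (j < k.+2)%N => //= _; rewrite ?expr0 ?expr1 /= /A /B /T; ring.
rewrite (eq_big_nat _ _ Ej) !big_split /= !prodrXr.
have hk1 : (1 <= k.+1 < n)%N by lia.
have Ea : (\sum_(1 <= j < k.+3) a j)%N = r_cnt n m k.+1.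
  rewrite /r_cnt hk1 big_nat_recl // [a 1%N]/a /= add0n.
  apply: eq_big_nat => j hj; rewrite /a.
  have -> : (2 <= j.+1)%N by lia.
  by rewrite /= eq_sym.
have Eb : (\sum_(1 <= j < k.+3) b j)%N = l_cnt n m k.+1.
  rewrite /l_cnt hk1 big_nat_recr // [b k.+2]/b ltnn /= addn0.
  apply: eq_big_nat => j hj; rewrite /b.
  have -> : (j < k.+2)%N by lia.
  by rewrite /= eq_sym.
have tot : (\sum_(1 <= j < k.+3) (1 - a j - b j) + \sum_(1 <= j < k.+3) a j
            + \sum_(1 <= j < k.+3) b j)%N = k.+2.
  rewrite -!big_split /= (eq_big_nat _ _ (F2 := fun _ => 1%N)) ?sum_nat_const_nat; first lia.
  by move=> j hj; have := sab j hj; lia.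
have rls : (l_cnt n m k.+1 + r_cnt n m k.+1 + s_cnt n m k.+1)%N = k.+1.
  rewrite /l_cnt /r_cnt /s_cnt hk1 -!big_split /=.
  rewrite (eq_big_nat _ _ (F2 := fun _ => 1%N)) ?sum_nat_const_nat; first lia.
  move=> j /andP[h1 h2]; case: Hm => [H1 H2].
  have hj2 : (j <= k.+1)%N by lia.
  have [e1 e2] := H2 k.+1 j h1 hj2 hk1.
  by apply: tri => //; apply: H1 => //; lia.
have Ec : (\sum_(1 <= j < k.+3) (1 - a j - b j))%N = (s_cnt n m k.+1).+1 by lia.
by rewrite Ea Eb Ec.
Qed.

Lemma sum0drop (F : nat -> nat) N : F 0%N = 0%N ->
  (\sum_(0 <= i < N) F i = \sum_(1 <= i < N) F i)%N.
Proof. by case: N => [|N] h; [rewrite !big_geq | rewrite big_ltn // h add0n]. Qed.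

Theorem mainTheorem7 (R : fieldType) (u v w : R) (X : nat -> R)
  (n : nat) (m : nat -> nat -> int) :
  (forall i : nat, (1 <= i <= n)%N -> X i != 0) ->
  is_monotone_triangle n m ->
  (forall j : nat, (1 <= j)%N -> (j < n)%N -> m n j < m n j.+1) ->
  \sum_(D : {ffun pos n -> 'I_3} | arrowed_ok m D) Wt u v w X m D =
  \prod_(1 <= i < n.+1) (u * X i + v * (X i)^-1 + w) * W0 u v w X n m.
Proof.
move=> hX Hm _.
rewrite (eq_bigr _ (fun D _ => @Wt_decomp _ u v w X _ m D hX)) -mulr_sumr.
have -> : \sum_(D : {ffun pos n -> 'I_3} | arrowed_ok m D) \prod_(p : pos n) hc u v w (X (prow p)) (D p)
   = \prod_(p : pos n) \sum_(c | okp m p c) hc u v w (X (prow p)) c.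
  exact: sum_distr.
rewrite (eq_bigr _ (fun p _ => @entry _ u v w X _ m p Hm)).
rewrite (prod_pos _ _ (fun i j => Sv u v w X m i j)).
rewrite (eq_big_nat _ _ (fun i (hi : (1 <= i < n.+1)%N) => @row_prod _ u v w X _ m Hm i hi)).
have Eu : u ^+ rM n m = \prod_(1 <= i < n.+1) u ^+ r_cnt n m i.-1.
  by rewrite prodrXr big_add1 /= /rM sum0drop.
have Ev : v ^+ lM n m = \prod_(1 <= i < n.+1) v ^+ l_cnt n m i.-1.
  by rewrite prodrXr big_add1 /= /lM sum0drop.
rewrite /W0 Eu Ev -!big_split /=.
apply: eq_big_nat => i hi.
rewrite /dM expo ?hX // exprS !exprMn.
have -> : w + u * X i + v * (X i)^-1 = u * X i + v * (X i)^-1 + w by ring.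
ring.
Qed.
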